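(* Let $n\ge 2$ be an integer, let $\log$ denote the base-$2$ logarithm, let $0<\gamma<1/2$, and for every integer $i\ge 0$ define $$\varepsilon^{(i)}=\frac{\gamma^{i+1}}{10\log(n)\,(i+1)^2}.$$ Then for every integer $k\ge 0$, $$\sum_{\substack{i,j\ge 0\\ i+j=k}} \varepsilon^{(i)}\varepsilon^{(j)}+\sum_{\substack{i,j\ge 0\\ i+j=k-1}} \varepsilon^{(i)}\varepsilon^{(j)} \le \frac{\varepsilon^{(k)}}{\log(n)}.$$ (An empty sum, e.g. the second sum when $k=0$, equals $0$.) *)

(* Defs.v *)
From Stdlib Require Import Reals.
Open Scope R_scope.

Definition log2 (x : R) : R := ln x / ln 2.

Definition eps (n : nat) (gamma : R) (i : nat) : R :=
  gamma ^ (i + 1) / (10 * log2 (INR n) * (INR (i + 1)) ^ 2).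

Definition conv_sum (n : nat) (gamma : R) (k : nat) : R :=
  sum_f_R0 (fun i => eps n gamma i * eps n gamma (k - i)) k.

Definition conv_sum_pred (n : nat) (gamma : R) (k : nat) : R :=
  match k with
  | O => 0
  | S k' => conv_sum n gamma k'
  end.

(* Main.v *)
Require Import Defs.
From Stdlib Require Import Reals Lra.
Lemma Rminus_ge_0_le_stub (a b : R) : (0 <= b - a)%R -> (a <= b)%R.
Proof. intros; lra. Qed.
Lemma ln_gt_0 (x : R) : (1 < x)%R -> (0 < ln x)%R.
Proof. intros; rewrite <- ln_1; apply ln_increasing; lra. Qed.
Lemma Rdiv_le_0_compat_stub (a b : R) : (0 <= a)%R -> (0 < b)%R -> (0 <= a / b)%R.
Proof. intros; unfold Rdiv; apply Rmult_le_pos; [lra| left; apply Rinv_0_lt_compat; lra]. Qed.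
From Stdlib Require Import Reals Lra Lia Psatz.
Open Scope R_scope.

Lemma rev_sum (f : nat -> R) (k : nat) :
  sum_f_R0 (fun i => f (k - i)%nat) k = sum_f_R0 f k.
Proof.
  induction k as [|k IH].
  - reflexivity.
  - rewrite decomp_sum by lia. simpl pred.
    rewrite (sum_eq (fun i => f (S k - S i)%nat) (fun i => f (k - i)%nat)).
    + rewrite IH. simpl. replace (k - 0)%nat with k by lia. lra.
    + intros i _. f_equal.
Qed.

Definition h (i : nat) : R := 1 / (INR (i + 1)) ^ 2.

Lemma h_bound k : sum_f_R0 h k <= 5/3 - 1 / (INR k + 3/2).
Proof.
  induction k as [|k IH].
  - simpl. unfold h. simpl. lra.
  - simpl sum_f_R0. rewrite S_INR. unfold h at 2.
    rewrite Nat.add_1_r, S_INR, S_INR.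
    assert (0 <= INR k) by apply pos_INR.
    assert (1 / (INR k + 1 + 1) ^ 2 <= 1 / (INR k + 3/2) - 1 / (INR k + 1 + 3/2)).
    { apply Rminus_ge_0_le_stub.
      replace (1 / (INR k + 3 / 2) - 1 / (INR k + 1 + 3 / 2) - 1 / (INR k + 1 + 1) ^ 2)
        with (1/4 / ((INR k + 3/2) * (INR k + 1 + 3/2) * (INR k + 1 + 1)^2)) by (field; lra).
      apply Rlt_le. apply Rdiv_lt_0_compat; [lra|]. repeat apply Rmult_lt_0_compat; try apply pow_lt; lra. }
    lra.
Qed.

Lemma h_bound' k : sum_f_R0 h k <= 5/3.
Proof. pose proof (h_bound k). assert (0 < 1 / (INR k + 3/2)).
  { pose proof (pos_INR k). apply Rdiv_lt_0_compat; lra. } lra. Qed.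

Definition T (k : nat) : R := sum_f_R0 (fun i => h i * h (k - i)%nat) k.

Lemma pair_bound a b : 0 < a -> 0 < b ->
  1 / a ^ 2 * (1 / b ^ 2) <= 2 * (1 / a ^ 2 + 1 / b ^ 2) / (a + b) ^ 2.
Proof.
  intros. apply Rminus_ge_0_le_stub.
  replace (2 * (1 / a ^ 2 + 1 / b ^ 2) / (a + b) ^ 2 - 1 / a ^ 2 * (1 / b ^ 2))
    with ((a - b)^2 / (a^2 * b^2 * (a+b)^2)) by (field; lra).
  unfold Rdiv; apply Rmult_le_pos; [apply pow2_ge_0|]; apply Rlt_le, Rinv_0_lt_compat; repeat apply Rmult_lt_0_compat; try apply pow_lt; lra.
Qed.

Lemma T_bound k : 0 <= T k /\ T k <= (20/3) / (INR (k + 2)) ^ 2.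
Proof.
  unfold T. split.
  - apply cond_pos_sum. intros i. unfold h.
    apply Rmult_le_pos; apply Rlt_le, Rdiv_lt_0_compat; try lra;
    apply pow_lt; apply lt_0_INR; lia.
  - apply Rle_trans with (sum_f_R0 (fun i => 2 / (INR (k+2))^2 * (h i + h (k - i)%nat)) k).
    + apply sum_Rle. intros i Hi. unfold h.
      replace (INR (k+2)) with (INR (i+1) + INR (k - i + 1)).
      2:{ rewrite <- plus_INR. f_equal. lia. }
      assert (0 < INR (i+1)) by (apply lt_0_INR; lia).
      assert (0 < INR (k - i + 1)) by (apply lt_0_INR; lia).
      pose proof (pair_bound _ _ H H0).
      replace (2 / (INR (i + 1) + INR (k - i + 1)) ^ 2 *
        (1 / INR (i + 1) ^ 2 + 1 / INR (k - i + 1) ^ 2)) with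
        (2 * (1 / INR (i + 1) ^ 2 + 1 / INR (k - i + 1) ^ 2) / (INR (i + 1) + INR (k - i + 1)) ^ 2)
        by (field; lra).
      exact H1.
    + rewrite (sum_eq _ (fun i => (h i + h (k - i)%nat) * (2 / INR (k + 2) ^ 2)))
        by (intros; apply Rmult_comm).
      rewrite <- scal_sum, plus_sum.
      rewrite (rev_sum h k).
      pose proof (h_bound' k).
      assert (0 < INR (k+2)) by (apply lt_0_INR; lia).
      assert (0 < 2 / INR (k+2) ^ 2) by (apply Rdiv_lt_0_compat; [lra| apply pow_lt; lra]).
      replace (20 / 3 / INR (k + 2) ^ 2) with (2 / INR (k+2) ^ 2 * (10/3)) by (field; lra).
      apply Rmult_le_compat_l; lra.
Qed.

Lemma conv_eq n g k : log2 (INR n) <> 0 ->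
  conv_sum n g k = T k * (g ^ (k + 2) / (10 * log2 (INR n)) ^ 2).
Proof.
  intros HL. unfold conv_sum, T.
  rewrite (Rmult_comm (sum_f_R0 _ _)), scal_sum. apply sum_eq. intros i Hi.
  unfold eps, h.
  assert (g ^ (k + 2) = g ^ (i + 1) * g ^ (k - i + 1)) as E.
  { rewrite <- pow_add. f_equal. lia. }
  rewrite E.
  assert (0 < INR (i+1)) by (apply lt_0_INR; lia).
  assert (0 < INR (k - i + 1)) by (apply lt_0_INR; lia).
  field. repeat split; lra.
Qed.

Lemma key p g L X A B : 0 < p -> 0 < g -> g < 1/2 -> 0 < L -> 1 <= X ->
  0 <= A -> A * X^2 <= 20/3 -> 0 <= B -> B * X^2 <= 20/3 ->
  A * (p * g * g / (10 * L) ^ 2) + B * (p * g / (10 * L) ^ 2) <= p * g / (10 * L * X ^ 2) / L.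
Proof.
  intros. apply Rminus_ge_0_le_stub.
  replace (p * g / (10 * L * X ^ 2) / L -
      (A * (p * g * g / (10 * L) ^ 2) + B * (p * g / (10 * L) ^ 2)))
      with (p * g * (10 - g * (A * X^2) - B * X^2) / (100 * L * L * X^2)) by (field; repeat split; nra).
  apply Rdiv_le_0_compat_stub; [|repeat apply Rmult_lt_0_compat; try apply pow_lt; lra].
  apply Rmult_le_pos; [nra|].
  assert (0 <= A * X^2) by (apply Rmult_le_pos; [lra| apply pow_le; lra]).
  assert (g * (A * X^2) <= 1/2 * (20/3)) by (apply Rmult_le_compat; lra).
  lra.
Qed.

Lemma mulX A Y X : 0 < X -> X <= Y -> A <= 20/3 / Y^2 -> A * X^2 <= 20/3.
Proof.
  intros. assert (0 < Y) by lra.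
  assert (A * Y^2 <= 20/3).
  { apply (Rmult_le_compat_r (Y^2)) in H1; [|nra].
    replace (20/3/Y^2 * Y^2) with (20/3) in H1 by (field; repeat split; nra). lra. }
  destruct (Rle_lt_dec A 0); [nra|].
  assert (X^2 <= Y^2) by nra. nra.
Qed.

Theorem lemma2p3 (n : nat) (gamma : R) (k : nat) :
  (2 <= n)%nat -> 0 < gamma -> gamma < 1 / 2 ->
  conv_sum n gamma k + conv_sum_pred n gamma k <= eps n gamma k / log2 (INR n).
Proof.
  intros Hn Hg Hg2.
  assert (HL : 0 < log2 (INR n)).
  { unfold log2. apply Rdiv_lt_0_compat; apply ln_gt_0; try lra.
    replace 1 with (INR 1) by reflexivity. apply lt_INR. lia. }
  rewrite conv_eq by lra.
  unfold eps.
  destruct (T_bound k) as [T0 T1].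
  destruct k as [|k'].
  - change (conv_sum_pred n gamma 0) with 0.
    replace (gamma ^ (0 + 2)) with (1 * gamma * gamma) by (simpl; ring).
    replace (gamma ^ (0 + 1)) with (1 * gamma) by (simpl; ring).
    replace 0 with (0 * (1 * gamma / (10 * log2 (INR n)) ^ 2)) by ring.
    apply key; try lra. all: simpl; try lra.
    simpl in T1. lra.
  - simpl conv_sum_pred. rewrite conv_eq by lra.
    destruct (T_bound k') as [T2 T3].
    replace (gamma ^ (S k' + 2)) with (gamma ^ S k' * gamma * gamma) by (rewrite pow_add; simpl; ring).
    replace (gamma ^ (k' + 2)) with (gamma ^ S k' * gamma) by (rewrite pow_add; simpl; ring).
    replace (gamma ^ (S k' + 1)) with (gamma ^ S k' * gamma) by (rewrite pow_add; simpl; ring).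
    assert (HX : 1 <= INR (S k' + 1)) by (apply (le_INR 1); lia).
    apply key; try lra.
    + apply pow_lt; lra.
    + apply (mulX _ (INR (S k' + 2))); try lra. apply le_INR; lia.
    + apply (mulX _ (INR (k' + 2))); try lra. right; f_equal; lia.
Qed.
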